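(* Let $\varepsilon=\varepsilon(n)\in(0,1/2)$ satisfy $1/\varepsilon = n^{o(1)}$. For every constant $C>0$ there exist constants $c>0$ and $n_0$ such that for every $n\ge n_0$ that is a power of $2$ the following holds: if an algorithm ${\mathcal A}=(M^{(0)},\dots,M^{(m)})$ in the linear algebraic model described in the context computes $\operatorname{Id}_n+\varepsilon F_n$ and is $(1+C\varepsilon)$-well conditioned, then $m\ge c\,\varepsilon^2 n\log n$.
   Context: For $n=2^k$, $F_n$ is the (normalized) $n\times n$ Walsh–Hadamard matrix, $F_n(i,j)=n^{-1/2}(-1)^{\langle i-1,j-1\rangle}$, where $\langle a,b\rangle$ is the dot product of the base-$2$ digit vectors of the integers $a,b$. For $i\ne i'$ and an angle $\Theta$, $R_{i,i',\Theta}\in\mathbb R^{n\times n}$ is the matrix with $R(i,i)=R(i',i')=\cos\Theta$, $R(i,i')=\sin\Theta$, $R(i',i)=-\sin\Theta$, all other diagonal entries $1$ and all other entries $0$. An algorithm with $m$ steps is a sequence of real $n\times n$ matrices ${\mathcal A}=(M^{(0)}=\operatorname{Id}_n,M^{(1)},\dots,M^{(m)})$ where for each $t\in[m]$ either $M^{(t)}$ is obtained from $M^{(t-1)}$ by multiplying one row by a nonzero real constant, or $M^{(t)}=R_{i_t,i'_t,\Theta_t}M^{(t-1)}$ for some rows $i_t\neq i'_t$ and angle $\Theta_t$. ${\mathcal A}$ computes $X$ if $M^{(m)}=X$. The condition number $\kappa(M)$ of a nonsingular matrix is the ratio of its largest to smallest singular value; ${\mathcal A}$ is $\kappa$-well conditioned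 if $\kappa(M^{(t)})\le\kappa$ for all $t\in[m]$. Logarithms are base $2$. *)

(* Defs.v *)
From HB Require Import structures.
From mathcomp Require Import all_boot all_order all_algebra.
From mathcomp Require Import reals exp trigo.
Set Implicit Arguments. Unset Strict Implicit. Unset Printing Implicit Defensive.
Import Order.TTheory GRing.Theory Num.Theory.
Local Open Scope ring_scope.

Section Defs.
Variable R : realType.

Definition bitdot (k a b : nat) : nat :=
  \sum_(l < k) (odd (a %/ 2 ^ l) && odd (b %/ 2 ^ l)).

(* normalized Walsh-Hadamard matrix of size n = 2^k, 0-indexed:
   F(i,j) = n^{-1/2} (-1)^{<i,j>}   (paper: 1-indexed, <i-1,j-1>) *)
Definition walsh (k : nat) : 'M[R]_(2 ^ k) :=
  \matrix_(i, j) ((-1) ^+ bitdot k i j / Num.sqrt ((2 ^ k)%:R)).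

Definition scale_row n (i : 'I_n) (c : R) (A : 'M[R]_n) : 'M[R]_n :=
  \matrix_(a, b) (if a == i then c * A a b else A a b).

Definition rot_mx n (i i' : 'I_n) (th : R) : 'M[R]_n :=
  \matrix_(a, b)
    (if (a == i) && (b == i) then cos th
     else if (a == i') && (b == i') then cos th
     else if (a == i) && (b == i') then sin th
     else if (a == i') && (b == i) then - sin th
     else if a == b then 1 else 0).

Definition alg_step n (A B : 'M[R]_n) : Prop :=
  (exists (i : 'I_n) (c : R), c != 0 /\ B = scale_row i c A) \/
  (exists (i i' : 'I_n) (th : R), i != i' /\ B = rot_mx i i' th *m A).

Definition is_algorithm n (m : nat) (M : nat -> 'M[R]_n) : Prop :=
  M 0%N = 1%:M /\ forall t, (1 <= t <= m)%N -> alg_step (M t.-1) (M t).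

Definition singular_value n (A : 'M[R]_n) (s : R) : Prop :=
  0 <= s /\ eigenvalue (A^T *m A) (s ^+ 2).

Definition well_cond n (kap : R) (A : 'M[R]_n) : Prop :=
  A \in unitmx /\
  forall s t, singular_value A s -> singular_value A t -> s <= kap * t.

Definition log2 (x : R) : R := ln x / ln 2.

End Defs.

(* Main.v *)
Require Import Defs.
From HB Require Import structures.
From mathcomp Require Import all_boot all_order all_algebra.
From mathcomp Require Import reals exp trigo.
From mathcomp Require Import classical_sets topology normedtype derive matrix_normedtype.
From mathcomp Require Import ring lra.
Import Order.TTheory GRing.Theory Num.Theory.
Local Open Scope ring_scope.

Module Aux.
Import numFieldTopology.Exports numFieldNormedType.Exports.
Set Implicit Arguments. Unset Strict Implicit. Unset Printing Implicit Defensive.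


Section LA.
Variable R : realType.

Definition bf n (S : 'M[R]_n) (v w : 'rV[R]_n) : R := (v *m S *m w^T) 0 0.

Lemma bfE n (S : 'M[R]_n) v w :
  bf S v w = \sum_i \sum_j v 0 i * S i j * w 0 j.
Proof.
rewrite /bf mxE; under eq_bigr do rewrite mxE big_distrl /=.
rewrite exchange_big; apply: eq_bigr => i _; apply: eq_bigr => j _.
by rewrite !mxE.
Qed.

Lemma sum_continuous (T : topologicalType) (I : Type) (s : seq I) (F : I -> T -> R) :
  (forall i, continuous (F i)) -> continuous (fun x => \sum_(i <- s) F i x).
Proof.
move=> cF; elim: s => [|a s IH].
  have -> : (fun x => \sum_(i <- [::]) F i x) = (fun=> 0).
    by apply/boolp.funext => x; rewrite big_nil.
  exact: cst_continuous.
have -> : (fun x => \sum_(i <- a :: s) F i x) = (fun x => F a x + \sum_(i <- s) F i x).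
  by apply/boolp.funext => x; rewrite big_cons.
by move=> x; apply: continuousD; [exact: cF | exact: IH].
Qed.

Lemma bf_continuous n (S : 'M[R]_n) : continuous (fun v => bf S v v).
Proof.
have -> : (fun v => bf S v v) = (fun v => \sum_i \sum_j v 0 i * S i j * v 0 j).
  by apply/boolp.funext => v; rewrite bfE.
apply: sum_continuous => i; apply: sum_continuous => j x.
apply: (@continuousM _ _ (fun v : 'rV[R]_n => v 0 i * S i j) (fun v => v 0 j)).
  apply: (@continuousM _ _ (fun v : 'rV[R]_n => v 0 i) (fun=> S i j)).
    exact: coord_continuous.
  exact: cst_continuous.
exact: coord_continuous.
Qed.

Lemma bfDl n (S : 'M[R]_n) v w z : bf S (v + w) z = bf S v z + bf S w z.
Proof.
rewrite !bfE -big_split; apply: eq_bigr => i _; rewrite -big_split.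
by apply: eq_bigr => j _; rewrite !mxE /=; ring.
Qed.

Lemma bfDr n (S : 'M[R]_n) v w z : bf S z (v + w) = bf S z v + bf S z w.
Proof.
rewrite !bfE -big_split; apply: eq_bigr => i _; rewrite -big_split.
by apply: eq_bigr => j _; rewrite !mxE /=; ring.
Qed.

Lemma bfZl n (S : 'M[R]_n) a v z : bf S (a *: v) z = a * bf S v z.
Proof.
rewrite !bfE mulr_sumr; apply: eq_bigr => i _; rewrite mulr_sumr.
by apply: eq_bigr => j _; rewrite !mxE /=; ring.
Qed.

Lemma bfZr n (S : 'M[R]_n) a v z : bf S z (a *: v) = a * bf S z v.
Proof.
rewrite !bfE mulr_sumr; apply: eq_bigr => i _; rewrite mulr_sumr.
by apply: eq_bigr => j _; rewrite !mxE /=; ring.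
Qed.

Lemma bf_sym n (S : 'M[R]_n) v w : S^T = S -> bf S v w = bf S w v.
Proof.
move=> sS; rewrite !bfE [RHS]exchange_big; apply: eq_bigr => i _.
apply: eq_bigr => j _; have -> : S j i = S i j by rewrite -{1}sS mxE.
ring.
Qed.

Lemma bf1 n (v w : 'rV[R]_n) : bf 1%:M v w = \sum_i v 0 i * w 0 i.
Proof.
rewrite bfE; apply: eq_bigr => i _; rewrite (bigD1 i) //= big1 ?addr0.
  by rewrite mxE eqxx mulr1.
by move=> j /negbTE ji; rewrite mxE eq_sym ji mulr0 mul0r.
Qed.

Lemma bf1_ge0 n (v : 'rV[R]_n) : 0 <= bf 1%:M v v.
Proof. by rewrite bf1 sumr_ge0 // => i _; rewrite -expr2 sqr_ge0. Qed.

Lemma bf1_eq0 n (v : 'rV[R]_n) : bf 1%:M v v = 0 -> v = 0.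
Proof.
rewrite bf1 => h; apply/rowP => i; rewrite mxE.
have h0 : forall j, predT j -> 0 <= v 0 j * v 0 j.
  by move=> j _; rewrite -expr2 sqr_ge0.
have /eqP := psumr_eq0P h0 h (isT : predT i).
by rewrite mulf_eq0 orbb => /eqP.
Qed.


Lemma bf0 n (S : 'M[R]_n) : bf S 0 0 = 0.
Proof. rewrite bfE big1 // => i _; rewrite big1 // => j _; by rewrite !mxE /=; ring. Qed.

Lemma sq_le_bf1 n (v : 'rV[R]_n) j : v 0 j * v 0 j <= bf 1%:M v v.
Proof.
rewrite bf1 (bigD1 j) //= lerDl sumr_ge0 // => i _.
by rewrite -expr2 sqr_ge0.
Qed.

Lemma rayleigh_max n (S : 'M[R]_n.+1) : S^T = S ->
  exists l, eigenvalue S l /\ forall v, bf S v v <= l * bf 1%:M v v.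
Proof.
move=> sS.
pose A := [set v : 'rV[R]_n.+1 | bf 1%:M v v = 1]%classic.
have A0 : (A !=set0)%classic.
  exists (delta_mx 0 0); rewrite /A /= bf1 (bigD1 0) //= big1 ?addr0.
    by rewrite !mxE eqxx mulr1.
  by move=> i /negbTE i0; rewrite !mxE i0 andbF mul0r.
have cA : compact A.
  apply: bounded_closed_compact.
    exists 1; split => // x x1 v Av /=.
    rewrite [X in X <= _]/Num.Def.normr /= mx_normrE.
    apply/bigmax_leP; split; first by apply: ltW; apply: lt_trans x1.
    move=> [i j] _ /=; apply: le_trans (ltW x1).
    have h := sq_le_bf1 v j; rewrite Av in h.
    rewrite (ord1 i) ler_norml; apply/andP; split; nra.
  have -> : A = ((fun v => bf 1%:M v v) @^-1` [set x | x = 1])%classic.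
    by [].
  by apply: (continuous_closedP _).1; [exact: (@bf_continuous _ 1%:M) | exact: closed_eq].
have [c /set_mem Ac cmax] := compact_EVT_max A0 cA (continuous_subspaceT (@bf_continuous _ S)).
set l := bf S c c.
have bound : forall v, bf S v v <= l * bf 1%:M v v.
  move=> v; have [v0|] := eqVneq (bf 1%:M v v) 0.
    by rewrite (bf1_eq0 v0) !bf0 mulr0.
  move=> qn0; have qp : 0 < bf 1%:M v v by rewrite lt_def qn0 bf1_ge0.
  set q := bf 1%:M v v in qn0 qp *.
  pose r := Num.sqrt q.
  have rp : 0 < r by rewrite sqrtr_gt0.
  have rr : r * r = q by rewrite -expr2 sqr_sqrtr // ltW.
  have Aw : A (r^-1 *: v).
    by rewrite /A /= bfZl bfZr -/q -rr; field; apply/lt0r_neq0.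
  have := cmax _ (mem_set Aw); rewrite bfZl bfZr -/l => h.
  have -> : bf S v v = (r * r) * (r^-1 * (r^-1 * bf S v v)).
    by field; apply/lt0r_neq0.
  by rewrite -rr mulrC ler_wpM2r // mulr_ge0 // ltW.
exists l; split => //.
pose w := c *m S - l *: c.
have wE : w = c *m S + (-l) *: c by rewrite /w scaleNr.
have e1 : bf 1%:M (c *m S) w = bf S c w by rewrite /bf mulmx1.
have key : bf S c w = bf 1%:M w w + l * bf 1%:M c w.
  have : bf 1%:M (c *m S + (-l) *: c) w = bf 1%:M w w by rewrite -wE.
  by rewrite bfDl bfZl e1 => <-; ring.
have s1 : (1%:M : 'M[R]_n.+1)^T = 1%:M by rewrite trmx1.
set a := bf 1%:M w w.
set b := bf S w w - l * a.
pose d := `|b| + 1.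
have dp : 0 < d by rewrite /d ltr_pwDr // normr_ge0.
pose t := a / d.
have td : t * d = a by rewrite /t; field; apply/lt0r_neq0.
have H := bound (c + t *: w).
rewrite !bfDl !bfDr !bfZl !bfZr (bf_sym w c sS) (bf_sym w c s1) in H.
rewrite Ac -/l -/a key in H.
have H0 : t ^+ 2 * (2 * d + b) <= 0.
  have -> : t ^+ 2 * (2 * d + b) = 2 * t * (t * d) + t ^+ 2 * b by ring.
  move: H; rewrite -/a /b; nra.
have bd : 0 < 2 * d + b.
  rewrite /d; have := ler_norm (- b); rewrite normrN; have := normr_ge0 b; lra.
have t0 : t = 0.
  apply/eqP; rewrite -sqrf_eq0 eq_le sqr_ge0 andbT.
  by rewrite -(pmulr_lle0 _ bd).
have a0 : a = 0 by rewrite -td t0 mul0r.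
have w0 := bf1_eq0 a0.
apply/eigenvalueP; exists c.
  by apply/eqP; rewrite -subr_eq0 -/w w0.
apply/eqP => c0; have := bf0 (1%:M : 'M[R]_n.+1); rewrite -c0 Ac => /eqP; by rewrite oner_eq0.
Qed.

Lemma bfN n (S : 'M[R]_n) v w : bf (- S) v w = - bf S v w.
Proof.
rewrite !bfE -sumrN; apply: eq_bigr => i _; rewrite -sumrN.
by apply: eq_bigr => j _; rewrite !mxE /=; ring.
Qed.

Lemma rayleigh_min n (S : 'M[R]_n.+1) : S^T = S ->
  exists l, eigenvalue S l /\ forall v, l * bf 1%:M v v <= bf S v v.
Proof.
move=> sS; have sN : (- S)^T = - S by rewrite linearN /= sS.
have [l [/eigenvalueP [v vS v0] H]] := rayleigh_max sN.
exists (- l); split.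
  apply/eigenvalueP; exists v => //.
  by apply/eqP; rewrite -eqr_opp -mulmxN vS scaleNr opprK.
by move=> w; have := H w; rewrite bfN; lra.
Qed.

Lemma bf_mulT n (X Y : 'M[R]_n) v w : bf (X *m Y^T) v w = bf 1%:M (v *m X) (w *m Y).
Proof. by rewrite /bf mulmx1 trmx_mul !mulmxA. Qed.

Lemma bf_eig n (S : 'M[R]_n) l v : v *m S = l *: v -> bf S v v = l * bf 1%:M v v.
Proof. by move=> vS; rewrite /bf vS mulmx1 -scalemxAl mxE. Qed.

Lemma bf1_delta n (i : 'I_n) : bf 1%:M (delta_mx 0 i) (delta_mx 0 i) = 1.
Proof.
rewrite bf1 (bigD1 i) //= big1 ?addr0; first by rewrite !mxE !eqxx mulr1.
by move=> j /negbTE ji; rewrite !mxE ji andbF mul0r.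
Qed.

Lemma sum_ab_le n (a b : 'I_n -> R) al : 0 < al ->
  \sum_j `|a j| * `|b j| <= (al * \sum_j a j ^+ 2 + (\sum_j b j ^+ 2) / al) / 2.
Proof.
move=> alp; rewrite mulr_sumr mulr_suml -big_split /= mulr_suml.
apply: ler_sum => j _.
have h : 0 <= (al * `|a j| - `|b j|) ^+ 2 by rewrite sqr_ge0.
have ea : a j ^+ 2 = `|a j| ^+ 2 by rewrite real_normK ?num_real.
have eb : b j ^+ 2 = `|b j| ^+ 2 by rewrite real_normK ?num_real.
rewrite ea eb.
have -> : (al * `|a j| ^+ 2 + `|b j| ^+ 2 / al) / 2 =
   `|a j| * `|b j| + (al * `|a j| - `|b j|) ^+ 2 / (2 * al).
  by field; apply/lt0r_neq0.
by rewrite lerDl divr_ge0 // mulr_ge0 // ltW.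
Qed.

Lemma wc_rowbound n (kap : R) (A : 'M[R]_n) : well_cond kap A ->
  forall i, \sum_j `|A i j| * `|invmx A j i| <= kap.
Proof.
case: n A => [A _ [] //|n A [Au wc] i].
have sQ : (A *m A^T)^T = A *m A^T by rewrite trmx_mul trmxK.
have sP : (A^T *m A)^T = A^T *m A by rewrite trmx_mul trmxK.
have [lm [/eigenvalueP [v vQ v0] bmax]] := rayleigh_max sQ.
have [mu [eP bmin]] := rayleigh_min sP.
have vA0 : v *m A != 0.
  apply: contra v0 => /eqP vA; apply/eqP.
  by rewrite -(mulmxK Au v) vA mul0mx.
have bf1p : forall w : 'rV[R]_n.+1, w != 0 -> 0 < bf 1%:M w w.
  by move=> w w0; rewrite lt_def bf1_ge0 andbT; apply: contra w0 => /eqP/bf1_eq0 ->.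
have lm0 : 0 <= lm.
  have := bf_eig vQ; rewrite bf_mulT.
  move=> e; have := bf1_ge0 (v *m A); rewrite e.
  by rewrite pmulr_lge0 // bf1p.
have eigP : eigenvalue (A^T *m A) lm.
  apply/eigenvalueP; exists (v *m A) => //.
  by rewrite mulmxA -(mulmxA v) vQ scalemxAl.
have [u uP u0] := eigenvalueP eP.
have mup : 0 < mu.
  have := bf_eig uP; rewrite -[X in A^T *m X](trmxK A) bf_mulT => e.
  have uA0 : u *m A^T != 0.
    apply: contra u0 => /eqP vA; apply/eqP.
    have AtU : A^T \in unitmx by rewrite unitmx_tr.
    by rewrite -(mulmxK AtU u) vA mul0mx.
  have := bf1p _ uA0; rewrite e.
  by rewrite pmulr_lgt0 // bf1p.
pose s := Num.sqrt lm; pose t := Num.sqrt mu.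
have s0 : 0 <= s by rewrite sqrtr_ge0.
have t0 : 0 < t by rewrite sqrtr_gt0.
have svs : singular_value A s by split => //; rewrite sqr_sqrtr.
have svt : singular_value A t by split; [exact: ltW | rewrite sqr_sqrtr // ltW].
have st := wc _ _ svs svt.
have tt := wc _ _ svt svt.
have kap1 : 1 <= kap by rewrite -(ler_pM2r t0) mul1r.
have kp : 0 < kap by lra.
have hX : \sum_j A i j ^+ 2 <= lm.
  have := bmax (delta_mx 0 i); rewrite bf1_delta mulr1.
  have e : bf 1%:M (delta_mx 0 i *m A) (delta_mx 0 i *m A) = \sum_j A i j ^+ 2.
    by rewrite -rowE bf1; apply: eq_bigr => j _; rewrite mxE expr2.
  by rewrite bf_mulT e.
have hY : mu * \sum_j invmx A j i ^+ 2 <= 1.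
  have := bmin (delta_mx 0 i *m (invmx A)^T).
  rewrite -[X in A^T *m X](trmxK A) bf_mulT -mulmxA -trmx_mul mulmxV // trmx1 mulmx1 bf1_delta.
  have e : bf 1%:M (delta_mx 0 i *m (invmx A)^T) (delta_mx 0 i *m (invmx A)^T) = \sum_j invmx A j i ^+ 2.
    by rewrite -rowE bf1; apply: eq_bigr => j _; rewrite !mxE expr2.
  by rewrite e.
set X := \sum_j _ in hX; set Y := \sum_j _ in hY.
pose al := (kap * t ^+ 2)^-1.
have alp : 0 < al by rewrite invr_gt0 mulr_gt0 // exprn_gt0.
apply: le_trans (sum_ab_le (fun j => A i j) (fun j => invmx A j i) alp) _.
rewrite -/X -/Y.
have lms : lm = s ^+ 2 by rewrite sqr_sqrtr.
have mut : mu = t ^+ 2 by rewrite sqr_sqrtr // ltW.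
rewrite lms in hX; rewrite mut in hY.
have s2 : s ^+ 2 <= kap ^+ 2 * t ^+ 2.
  by rewrite -exprMn ler_pXn2r // ?nnegrE // mulr_ge0 // ltW.
have e1 : al * X <= kap.
  rewrite /al mulrC ler_pdivrMr ?mulr_gt0 ?exprn_gt0 //.
  have -> : kap * (kap * t ^+ 2) = kap ^+ 2 * t ^+ 2 by ring.
  exact: le_trans hX s2.
have e2 : Y / al <= kap.
  rewrite /al invrK.
  have -> : Y * (kap * t ^+ 2) = kap * (t ^+ 2 * Y) by ring.
  by rewrite -[X in _ <= X]mulr1 ler_wpM2l // ltW.
lra.
Qed.

End LA.


Section Pot.
Variable R : realType.

Definition gent (p : R) : R := - p * ln `|p|.

Lemma gent0 : gent 0 = 0.
Proof. by rewrite /gent oppr0 mul0r. Qed.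

Lemma gent1 : gent 1 = 0.
Proof. by rewrite /gent normr1 ln1 mulr0. Qed.

Lemma gent_bound p : `|p| <= 1 -> `|gent p| <= 1.
Proof.
move=> p1; have [->|p0] := eqVneq p 0; first by rewrite gent0 normr0.
have pp : 0 < `|p| by rewrite normr_gt0.
rewrite /gent normrM normrN ler0_norm ?ln_le0 //.
have h : - ln `|p| <= `|p|^-1.
  by rewrite -lnV ?posrE // ltW // ln_sublinear // invr_gt0.
apply: le_trans (_ : `|p| * `|p|^-1 <= 1); last by rewrite mulfV ?lt0r_neq0.
by rewrite ler_wpM2l // ltW.
Qed.

Lemma gent_scale L p : 0 < L -> gent (L * p) = L * gent p - L * p * ln L.
Proof.
move=> Lp; have [->|p0] := eqVneq p 0; first by rewrite mulr0 gent0; ring.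
rewrite /gent normrM (gtr0_norm Lp) lnM ?posrE ?normr_gt0 //; ring.
Qed.

Lemma gent_diff p1 p2 q1 q2 : p1 + p2 = q1 + q2 ->
  `|gent p1 + gent p2 - (gent q1 + gent q2)| <=
   4 * (`|p1| + `|p2| + `|q1| + `|q2|).
Proof.
move=> e; set S := _ + _ + _ + _.
have S0 : 0 <= S by rewrite /S !addr_ge0.
have [Sz|Sp] := eqVneq S 0.
  have [h1 h2 h3 h4] : [/\ p1 = 0, p2 = 0, q1 = 0 & q2 = 0].
    move: Sz; rewrite /S => Sz.
    have := normr_ge0 p1; have := normr_ge0 p2; have := normr_ge0 q1; have := normr_ge0 q2.
    move=> a b c d; split; apply/normr0_eq0; lra.
  by rewrite h1 h2 h3 h4 !gent0 !addr0 subrr normr0 Sz mulr0.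
have Spos : 0 < S by rewrite lt_def Sp S0.
have ex : forall x, x = S * (x / S) by move=> x; field; apply/lt0r_neq0.
have bx : forall x, `|x| <= S -> `|gent (x / S)| <= 1.
  by move=> x xS; apply: gent_bound; rewrite normrM normfV (gtr0_norm Spos) ler_pdivrMr // mul1r.
have b1 : `|p1| <= S by rewrite /S; have := normr_ge0 p2; have := normr_ge0 q1; have := normr_ge0 q2; lra.
have b2 : `|p2| <= S by rewrite /S; have := normr_ge0 p1; have := normr_ge0 q1; have := normr_ge0 q2; lra.
have b3 : `|q1| <= S by rewrite /S; have := normr_ge0 p1; have := normr_ge0 p2; have := normr_ge0 q2; lra.
have b4 : `|q2| <= S by rewrite /S; have := normr_ge0 p1; have := normr_ge0 p2; have := normr_ge0 q1; lra.
have sc : forall x, gent x = S * gent (x / S) - x * ln S.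
  move=> x; have h := gent_scale (x / S) Spos.
  by rewrite -(ex x) in h; rewrite h.
rewrite (sc p1) (sc p2) (sc q1) (sc q2).
set a1 := gent (p1 / S); set a2 := gent (p2 / S); set a3 := gent (q1 / S); set a4 := gent (q2 / S).
have -> : S * a1 - p1 * ln S + (S * a2 - p2 * ln S) -
     (S * a3 - q1 * ln S + (S * a4 - q2 * ln S)) =
   S * (a1 + a2 - (a3 + a4)) - (p1 + p2 - (q1 + q2)) * ln S.
  by ring.
rewrite e subrr mul0r subr0 normrM (gtr0_norm Spos) mulrC ler_wpM2r //.
have := bx _ b1; have := bx _ b2; have := bx _ b3; have := bx _ b4.
rewrite -/a1 -/a2 -/a3 -/a4 => h4 h3 h2 h1.
apply: le_trans (ler_normB _ _) _.
have := ler_normD a1 a2; have := ler_normD a3 a4; lra.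
Qed.

End Pot.


Lemma bit_mod a k l : (l < k)%N -> odd (a %/ 2 ^ l) = odd ((a %% 2 ^ k) %/ 2 ^ l).
Proof.
move=> lk; rewrite {1}(divn_eq a (2 ^ k)).
have -> : (2 ^ k = 2 ^ (k - l) * 2 ^ l)%N by rewrite -expnD subnK // ltnW.
rewrite mulnA divnMDl ?expn_gt0 // oddD oddM oddX subn_eq0 leqNgt lk /=.
by rewrite andbF.
Qed.

Lemma bitdot_modl k a b : bitdot k a b = bitdot k (a %% 2 ^ k) b.
Proof. by rewrite /bitdot; apply: eq_bigr => l _; rewrite -bit_mod. Qed.

Lemma bitdot_sym k a b : bitdot k a b = bitdot k b a.
Proof. by rewrite /bitdot; apply: eq_bigr => l _; rewrite andbC. Qed.

Lemma bitdot_modr k a b : bitdot k a b = bitdot k a (b %% 2 ^ k).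
Proof. by rewrite bitdot_sym bitdot_modl bitdot_sym. Qed.

Lemma bitdotS k a b :
  bitdot k.+1 a b = (bitdot k a b + (odd (a %/ 2 ^ k) && odd (b %/ 2 ^ k)))%N.
Proof. by rewrite /bitdot big_ord_recr. Qed.

Section W.
Variable R : realType.

Lemma walsh_sum k (i l : nat) : (i < 2 ^ k)%N -> (l < 2 ^ k)%N ->
  \sum_(j < 2 ^ k) (-1) ^+ (bitdot k i j + bitdot k j l) = (i == l)%:R * (2 ^ k)%:R :> R.
Proof.
elim: k i l => [|k IH] i l.
  rewrite expn0 !ltnS !leqn0 => /eqP -> /eqP ->.
  by rewrite big_ord1 /bitdot !big_ord0 eqxx expr0 mul1r.
move=> hi hl.
set i' := (i %% 2 ^ k)%N; set l' := (l %% 2 ^ k)%N.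
have hi' : (i' < 2 ^ k)%N by rewrite ltn_pmod ?expn_gt0.
have hl' : (l' < 2 ^ k)%N by rewrite ltn_pmod ?expn_gt0.
set oi := odd (i %/ 2 ^ k); set ol := odd (l %/ 2 ^ k).
have e2 : (2 ^ k.+1 = 2 ^ k + 2 ^ k)%N by rewrite expnS mul2n addnn.
rewrite e2 big_split_ord /=.
have E1 : forall j : 'I_(2 ^ k), (bitdot k.+1 i (lshift (2 ^ k) j) + bitdot k.+1 (lshift (2 ^ k) j) l
      = bitdot k i' j + bitdot k j l')%N.
  move=> j; rewrite /= !bitdotS (divn_small (ltn_ord j)) /= andbF /= !addn0.
  by rewrite (bitdot_modl k i) (bitdot_modr k j l).
have E2 : forall j : 'I_(2 ^ k), (bitdot k.+1 i (rshift (2 ^ k) j) + bitdot k.+1 (rshift (2 ^ k) j) l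
      = (bitdot k i' j + oi) + (bitdot k j l' + ol))%N.
  move=> j; rewrite /= !bitdotS.
  have d1 : ((2 ^ k + j) %/ 2 ^ k = 1)%N.
    by rewrite -{1}(mul1n (2 ^ k)%N) divnMDl ?expn_gt0 // divn_small.
  have m1 : ((2 ^ k + j) %% 2 ^ k = j)%N.
    by rewrite modnDl modn_small.
  rewrite d1 /= andbT -/oi -/ol.
  by rewrite (bitdot_modr k i (2 ^ k + j)%N) m1 (bitdot_modl k i j) (bitdot_modl k (2 ^ k + j)%N l) m1 (bitdot_modr k j l).
under eq_bigr do rewrite E1.
have E2' : forall j : 'I_(2 ^ k),
   (-1) ^+ (bitdot k.+1 i (rshift (2 ^ k) j) + bitdot k.+1 (rshift (2 ^ k) j) l) =
   (-1) ^+ (bitdot k i' j + bitdot k j l') * (-1) ^+ (oi + ol) :> R.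
  by move=> j; rewrite E2 -exprD addnACA.
under [X in _ + X]eq_bigr do rewrite E2'.
rewrite -mulr_suml IH //.
have xb : forall x : nat, (x < 2)%N -> x = odd x.
  by case=> [|[|x]].
have di : (i %/ 2 ^ k = oi)%N.
  by apply: xb; rewrite ltn_divLR ?expn_gt0 // -expnS.
have dl : (l %/ 2 ^ k = ol)%N.
  by apply: xb; rewrite ltn_divLR ?expn_gt0 // -expnS.
have key : (i == l) = (i' == l') && (oi == ol).
  apply/eqP/andP => [e|[/eqP h1 /eqP h2]]; first by rewrite /i' /l' /oi /ol e !eqxx.
  by rewrite (divn_eq i (2 ^ k)) (divn_eq l (2 ^ k)) di dl -/i' -/l' h1 h2.
rewrite key natrD; case: (i' == l'); move: (oi) (ol) => [] []; rewrite /= ?expr1 ?expr0;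
  try ring.
Qed.

Lemma sqrt2k k : Num.sqrt ((2 ^ k)%:R : R) * Num.sqrt ((2 ^ k)%:R) = (2 ^ k)%:R.
Proof. by rewrite -expr2 sqr_sqrtr // ler0n. Qed.

Lemma sqrt2k_gt0 k : 0 < Num.sqrt ((2 ^ k)%:R : R).
Proof. by rewrite sqrtr_gt0 ltr0n expn_gt0. Qed.

Lemma walsh_mul k : walsh R k *m walsh R k = 1%:M.
Proof.
apply/matrixP => a b; rewrite !mxE.
have -> : \sum_j walsh R k a j * walsh R k j b =
    (\sum_(j < 2 ^ k) (-1) ^+ (bitdot k a j + bitdot k j b)) /
    (Num.sqrt ((2 ^ k)%:R) * Num.sqrt ((2 ^ k)%:R)).
  rewrite mulr_suml; apply: eq_bigr => j _; rewrite !mxE exprD.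
  by field; apply/lt0r_neq0/sqrt2k_gt0.
rewrite walsh_sum // sqrt2k mulfK ?pnatr_eq0 -?lt0n ?expn_gt0 //.
Qed.

Lemma walsh_sym k a b : walsh R k a b = walsh R k b a.
Proof. by rewrite !mxE bitdot_sym. Qed.

Lemma walsh_sq k a b : walsh R k a b * walsh R k b a = ((2 ^ k)%:R)^-1.
Proof.
rewrite (walsh_sym b a) !mxE -expr2 expr_div_n sqrr_sign.
by rewrite sqr_sqrtr ?ler0n // div1r.
Qed.
End W.


Section Rot.
Variable R : realType.

Lemma sum_delta n (x : 'I_n) (g : 'I_n -> R) : \sum_l (l == x)%:R * g l = g x.
Proof.
rewrite (bigD1 x) //= eqxx mul1r big1 ?addr0 // => l /negbTE ->.
by rewrite mul0r.
Qed.

Ltac neqs := repeat match goal with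
 | H : is_true (?x != ?y) |- _ => move: H => /negbTE H; have := H; rewrite eq_sym => ?
 end.
Ltac brute := repeat (match goal with
   | H : (?x == ?y) = false |- context[?x == ?y] => rewrite H
   | |- context[?x == ?x] => rewrite eqxx end); simpl.

Lemma rot_row n (i i' : 'I_n) (th : R) a l : i != i' ->
  rot_mx i i' th a l =
    if a == i then (l == i)%:R * cos th + (l == i')%:R * sin th
    else if a == i' then (l == i)%:R * (- sin th) + (l == i')%:R * cos th
    else (l == a)%:R.
Proof.
move=> ii'; rewrite mxE.
have [->|ai] := eqVneq a i.
  have [e|li] := eqVneq l i; first by rewrite ?e; neqs; brute; ring.
  have [e|li'] := eqVneq l i'; first by rewrite ?e; neqs; brute; ring.
  by neqs; brute; ring.
have [->|ai'] := eqVneq a i'.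
  have [e|li] := eqVneq l i; first by rewrite ?e; neqs; brute; ring.
  have [e|li'] := eqVneq l i'; first by rewrite ?e; neqs; brute; ring.
  by neqs; brute; ring.
by neqs; brute; rewrite eq_sym; case: (l == a).
Qed.

Lemma sum_rot n (i i' : 'I_n) (th : R) a (f : 'I_n -> R) : i != i' ->
  \sum_l rot_mx i i' th a l * f l =
    if a == i then cos th * f i + sin th * f i'
    else if a == i' then - sin th * f i + cos th * f i'
    else f a.
Proof.
move=> ii'; under eq_bigr do rewrite rot_row //.
case: ifP => _.
  under eq_bigr do rewrite mulrDl.
  rewrite big_split /=.
  under eq_bigr do rewrite -mulrA.
  under [X in _ + X]eq_bigr do rewrite -mulrA.
  by rewrite !sum_delta; ring.
case: ifP => _.
  under eq_bigr do rewrite mulrDl.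
  rewrite big_split /=.
  under eq_bigr do rewrite -mulrA.
  under [X in _ + X]eq_bigr do rewrite -mulrA.
  by rewrite !sum_delta; ring.
by rewrite sum_delta.
Qed.

Lemma rot_orth n (i i' : 'I_n) (th : R) : i != i' ->
  rot_mx i i' th *m (rot_mx i i' th)^T = 1%:M.
Proof.
move=> ii'; apply/matrixP => a b.
have -> : (rot_mx i i' th *m (rot_mx i i' th)^T) a b =
   \sum_l rot_mx i i' th a l * rot_mx i i' th b l.
  by rewrite mxE; apply: eq_bigr => l _; rewrite [X in _ * X]mxE.
rewrite [RHS]mxE sum_rot // !rot_row //.
have ci := cos2Dsin2 th.
have [->|ai] := eqVneq a i.
  have [e|bi] := eqVneq b i; first by rewrite ?e; neqs; brute; nra.
  have [e|bi'] := eqVneq b i'; first by rewrite ?e; neqs; brute; nra.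
  by neqs; brute; nra.
have [->|ai'] := eqVneq a i'.
  have [e|bi] := eqVneq b i; first by rewrite ?e; neqs; brute; nra.
  have [e|bi'] := eqVneq b i'; first by rewrite ?e; neqs; brute; nra.
  by neqs; brute; nra.
neqs; brute; have [->|bi] := eqVneq b i; first by brute; ring.
have [->|bi'] := eqVneq b i'; first by brute; ring.
done.
Qed.

End Rot.


Section Main.
Variable R : realType.

Definition Phi n (M : 'M[R]_n) := \sum_a \sum_b gent (M a b * invmx M b a).
Definition RB n (kap : R) (M : 'M[R]_n) :=
  forall a, \sum_b `|M a b| * `|invmx M b a| <= kap.

Lemma inv_uniq n (A B : 'M[R]_n) : A *m B = 1%:M -> invmx A = B.
Proof.
move=> AB; have [Au _] := mulmx1_unit AB.
by rewrite -[invmx A]mulmx1 -AB mulmxA mulVmx // mul1mx.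
Qed.

Lemma invmx_rot n (i i' : 'I_n) th (M : 'M[R]_n) : i != i' -> M \in unitmx ->
  invmx (rot_mx i i' th *m M) = invmx M *m (rot_mx i i' th)^T.
Proof.
move=> ii' Mu; apply: inv_uniq.
by rewrite mulmxA -(mulmxA _ M) mulmxV // mulmx1 rot_orth.
Qed.

Lemma phi_split n (F G : 'I_n -> R) i i' : i != i' ->
  (forall a, a != i -> a != i' -> F a = G a) ->
  \sum_a F a - \sum_a G a = F i + F i' - (G i + G i').
Proof.
move=> ii' FG.
have sp : forall H : 'I_n -> R,
    \sum_a H a = H i + H i' + \sum_(a | (a != i) && (a != i')) H a.
  move=> H; rewrite (bigD1 i) //= (bigD1 i') /=; last by rewrite eq_sym.
  by rewrite addrA.
rewrite (sp F) (sp G).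
have -> : \sum_(a | (a != i) && (a != i')) F a = \sum_(a | (a != i) && (a != i')) G a.
  by apply: eq_bigr => a /andP [h1 h2]; apply: FG.
ring.
Qed.

Lemma phi_rot n (i i' : 'I_n) th (M : 'M[R]_n) kap : i != i' -> M \in unitmx ->
  RB kap M -> RB kap (rot_mx i i' th *m M) ->
  Phi M - 16 * kap <= Phi (rot_mx i i' th *m M).
Proof.
move=> ii' Mu rbM rbM'.
set M' := rot_mx i i' th *m M; set Y := invmx M.
have eM : forall a b, M' a b = if a == i then cos th * M i b + sin th * M i' b
    else if a == i' then - sin th * M i b + cos th * M i' b else M a b.
  by move=> a b; rewrite mxE (sum_rot th a (fun l => M l b) ii').
have eY : forall a b, invmx M' b a = if a == i then cos th * Y b i + sin th * Y b i'
    else if a == i' then - sin th * Y b i + cos th * Y b i' else Y b a.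
  move=> a b; rewrite /M' invmx_rot // mxE.
  under eq_bigr do rewrite mxE mulrC.
  by rewrite (sum_rot th a (fun l => Y b l) ii').
pose F a := \sum_b gent (M' a b * invmx M' b a).
pose G a := \sum_b gent (M a b * Y b a).
have sp := @phi_split n F G i i' ii'.
have FG : forall a, a != i -> a != i' -> F a = G a.
  move=> a ai ai'; apply: eq_bigr => b _.
  by rewrite eM eY (negbTE ai) (negbTE ai').
have := sp FG; rewrite -/(Phi M') -[\sum_a G a]/(Phi M) => e.
pose p1 b := M i b * Y b i; pose p2 b := M i' b * Y b i'.
pose q1 b := M' i b * invmx M' b i; pose q2 b := M' i' b * invmx M' b i'.
have sumeq : forall b, p1 b + p2 b = q1 b + q2 b.
  have ii'' : (i' == i) = false by rewrite eq_sym (negbTE ii').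
  move=> b; rewrite /q1 /q2 !eM !eY !eqxx ?(negbTE ii') ?ii'' /=.
  rewrite /p1 /p2.
  have -> : (cos th * M i b + sin th * M i' b) * (cos th * Y b i + sin th * Y b i') +
     (- sin th * M i b + cos th * M i' b) * (- sin th * Y b i + cos th * Y b i') =
     (cos th ^+ 2 + sin th ^+ 2) * (M i b * Y b i + M i' b * Y b i') by ring.
  by rewrite cos2Dsin2 mul1r.
have bnd : G i + G i' - (F i + F i') <=
    4 * (\sum_b `|p1 b| + \sum_b `|p2 b| + \sum_b `|q1 b| + \sum_b `|q2 b|).
  have -> : G i + G i' - (F i + F i') =
      \sum_b (gent (p1 b) + gent (p2 b) - (gent (q1 b) + gent (q2 b))).
    by rewrite sumrB !big_split.
  rewrite -!big_split mulr_sumr; apply: ler_sum => b _.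
  apply: le_trans (ler_norm _) _.
  by apply: gent_diff.
have s1 : \sum_b `|p1 b| <= kap.
  by apply: le_trans (rbM i); apply: ler_sum => b _; rewrite normrM.
have s2 : \sum_b `|p2 b| <= kap.
  by apply: le_trans (rbM i'); apply: ler_sum => b _; rewrite normrM.
have s3 : \sum_b `|q1 b| <= kap.
  by apply: le_trans (rbM' i); apply: ler_sum => b _; rewrite normrM.
have s4 : \sum_b `|q2 b| <= kap.
  by apply: le_trans (rbM' i'); apply: ler_sum => b _; rewrite normrM.
lra.
Qed.

Lemma phi_scale n (i : 'I_n) c (M : 'M[R]_n) : c != 0 -> M \in unitmx ->
  Phi (scale_row i c M) = Phi M.
Proof.
move=> c0 Mu.
pose d := \row_a (if a == i then c else 1 : R).
pose d' := \row_a (if a == i then c^-1 else 1 : R).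
have eS : scale_row i c M = diag_mx d *m M.
  by apply/matrixP => a b; rewrite mul_diag_mx !mxE; case: ifP; rewrite ?mul1r.
have eI : invmx (scale_row i c M) = invmx M *m diag_mx d'.
  apply: inv_uniq; rewrite eS mulmxA -(mulmxA _ M) mulmxV // mulmx1 mulmx_diag.
  rewrite -diag_const_mx; congr diag_mx; apply/rowP => j; rewrite !mxE.
  by case: ifP => _; rewrite ?mulfV ?mulr1.
rewrite /Phi eI eS; apply: eq_bigr => a _; apply: eq_bigr => b _.
rewrite mul_diag_mx mul_mx_diag !mxE; congr gent.
by case: ifP => _; [field | ring].
Qed.

Lemma RB1 n kap : 1 <= kap -> RB kap (1%:M : 'M[R]_n).
Proof.
move=> k1 a; rewrite invmx1.
rewrite (bigD1 a) //= big1 ?addr0; first by rewrite !mxE eqxx normr1 mulr1.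
by move=> b /negbTE ba; rewrite !mxE eq_sym ba normr0 mul0r.
Qed.

Lemma Phi1 n : Phi (1%:M : 'M[R]_n) = 0.
Proof.
rewrite /Phi invmx1; apply: big1 => a _; apply: big1 => b _.
rewrite !mxE eq_sym; case: (b == a) => /=; first by rewrite mulr1 gent1.
by rewrite mulr0 gent0.
Qed.

End Main.


Section Final.
Variable R : realType.

Lemma final_inv k (e : R) : 1 - e ^+ 2 != 0 ->
  invmx (1%:M + e *: walsh R k) = (1 - e ^+ 2)^-1 *: (1%:M - e *: walsh R k).
Proof.
move=> ne; apply: inv_uniq.
rewrite -scalemxAr mulmxDl mul1mx !mulmxBr mulmx1 -!scalemxAl -!scalemxAr walsh_mul.
apply/matrixP => a b; rewrite !mxE /=.
by case: (a == b) => /=; field; rewrite ne andbT; apply/lt0r_neq0/sqrt2k_gt0.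
Qed.

Lemma phi_final k (e : R) : 0 < e -> e < 2^-1 ->
  Phi (1%:M + e *: walsh R k) <= - ((2 ^ k)%:R - 1) * e ^+ 2 * ln ((2 ^ k)%:R).
Proof.
move=> e0 e1.
set N : R := (2 ^ k)%:R.
have N1 : 1 <= N by rewrite /N (ler_nat _ 1) expn_gt0.
have Np : 0 < N by lra.
have ne : 1 - e ^+ 2 != 0 by apply/lt0r_neq0; nra.
have ep : 0 < 1 - e ^+ 2 by nra.
set K := - (e ^+ 2 / N) * ln N.
have lnN : 0 <= ln N by rewrite ln_ge0.
have pe : forall a b : 'I_(2 ^ k), (1%:M + e *: walsh R k) a b * invmx (1%:M + e *: walsh R k) b a =
   ((a == b)%:R + e * walsh R k a b) * ((1 - e ^+ 2)^-1 * ((b == a)%:R - e * walsh R k b a)).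
  by move=> a b; rewrite final_inv // !mxE.
have diag : forall a, gent ((1%:M + e *: walsh R k) a a * invmx (1%:M + e *: walsh R k) a a) <= 0.
  move=> a; rewrite pe eqxx.
  set p := _ * _.
  have ep2 : p = (1 - e ^+ 2 * (walsh R k a a * walsh R k a a)) / (1 - e ^+ 2).
    by rewrite /p /=; field.
  rewrite walsh_sq -/N in ep2.
  have p1 : 1 <= p.
    rewrite ep2 ler_pdivlMr // mul1r.
    have : N^-1 <= 1 by rewrite invf_le1.
    nra.
  rewrite /gent ger0_norm; last lra.
  rewrite mulNr oppr_le0 mulr_ge0 //; [lra | exact: ln_ge0].
have off : forall a b, b != a -> gent ((1%:M + e *: walsh R k) a b * invmx (1%:M + e *: walsh R k) b a) <= K.
  move=> a b ba; rewrite pe (negbTE ba) eq_sym (negbTE ba) add0r sub0r.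
  set q := e ^+ 2 / (N * (1 - e ^+ 2)).
  have eq : e * walsh R k a b * ((1 - e ^+ 2)^-1 * - (e * walsh R k b a)) = - q.
    have := walsh_sq R a b; rewrite -/N => w.
    rewrite /q.
    have -> : e * walsh R k a b * ((1 - e ^+ 2)^-1 * - (e * walsh R k b a)) =
       - (e ^+ 2 * (walsh R k a b * walsh R k b a) / (1 - e ^+ 2)) by field.
    by rewrite w; congr (- _); field; rewrite ne /=; apply/lt0r_neq0.
  rewrite eq.
  have qp : 0 < q by rewrite /q divr_gt0 ?mulr_gt0 // exprn_gt0.
  have qN : q <= N^-1.
    have -> : q = N^-1 * (e ^+ 2 / (1 - e ^+ 2)) by rewrite /q; field; rewrite ?ne ?(lt0r_neq0 Np).
    apply: ler_piMr; first by rewrite invr_ge0 ltW.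
    rewrite ler_pdivrMr //; nra.
  have qe : e ^+ 2 / N <= q.
    have -> : q = e ^+ 2 / N * (1 - e ^+ 2)^-1 by rewrite /q; field; rewrite ?ne ?(lt0r_neq0 Np).
    apply: ler_peMr; first by rewrite divr_ge0 ?ltW ?exprn_gt0.
    rewrite invf_ge1 //; nra.
  have lq : ln q <= - ln N.
    rewrite -lnV ?posrE //; rewrite ler_ln ?posrE ?invr_gt0 //.
  rewrite /gent opprK normrN (gtr0_norm qp) /K.
  have : q * ln q <= q * - ln N by rewrite ler_wpM2l // ltW.
  have : q * - ln N <= e ^+ 2 / N * - ln N.
    by rewrite ler_wnM2r // oppr_le0.
  rewrite mulNr; lra.
rewrite /Phi.
apply: le_trans (_ : \sum_(a < 2 ^ k) (K * N - K) <= _).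
  apply: ler_sum => a _; rewrite (bigD1 a) //=.
  have -> : K * N - K = 0 + \sum_(b | b != a) K.
    have : \sum_(b < 2 ^ k) K = K + \sum_(b | b != a) K by rewrite (bigD1 a).
    rewrite sumr_const card_ord -/N => h.
    rewrite add0r; rewrite -mulr_natr -/N in h; lra.
  by apply: lerD; [exact: diag | apply: ler_sum => b ba; exact: off].
rewrite sumr_const card_ord -/N /K -mulr_natr -/N.
have -> : (- (e ^+ 2 / N) * ln N * N - - (e ^+ 2 / N) * ln N) * N =
   - (N - 1) * e ^+ 2 * ln N by field; apply/lt0r_neq0.
by [].
Qed.

End Final.

End Aux.
Import Aux.

Theorem proposition2p1 (R : realType) (eps : nat -> R)
  (heps : forall n : nat, 0 < eps n < 2^-1)
  (heps_sub : forall delta : R, 0 < delta ->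
     exists N : nat, forall n : nat, (N <= n)%N -> (eps n)^-1 <= powR (n%:R) delta) :
  forall C : R, 0 < C ->
  exists (c : R) (n0 : nat), 0 < c /\
  forall k : nat, (n0 <= 2 ^ k)%N ->
  forall (m : nat) (M : nat -> 'M[R]_(2 ^ k)),
    is_algorithm m M ->
    M m = 1%:M + eps (2 ^ k)%N *: walsh R k ->
    (forall t : nat, (1 <= t <= m)%N -> well_cond (1 + C * eps (2 ^ k)%N) (M t)) ->
    c * (eps (2 ^ k)%N) ^+ 2 * (2 ^ k)%:R * log2 ((2 ^ k)%:R) <= m%:R.
Proof.
move=> C Cp.
have l2 : 0 < ln (2 : R) by rewrite ln_gt0 // ltr1n.
exists (ln 2 / (32 * (1 + C))), 0%N; split.
  by rewrite divr_gt0 // mulr_gt0 //; lra.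
move=> k _ m M [M0 steps] Mm wc.
have /andP [e0 e1] := heps (2 ^ k)%N.
set e := eps (2 ^ k)%N in Mm wc e0 e1 *.
set kap := 1 + C * e in wc *.
have Ce : 0 < C * e by rewrite mulr_gt0.
have k1 : 1 <= kap by rewrite /kap; lra.
have unitt : forall t, (t <= m)%N -> M t \in unitmx.
  case=> [_|t tm]; first by rewrite M0 unitmx1.
  by have [] := wc t.+1 tm.
have rbt : forall t, (t <= m)%N -> RB kap (M t).
  case=> [_|t tm]; first by rewrite M0; apply: RB1.
  by apply: wc_rowbound; apply: wc.
have pot : forall t, (t <= m)%N -> - (16 * kap) * t%:R <= Phi (M t).
  elim=> [_|t IH tm]; first by rewrite M0 Phi1 mulr0.
  have tm' : (t <= m)%N by apply: ltnW.
  have := IH tm' => IHt.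
  have st : alg_step (M t) (M t.+1) by apply: (steps t.+1).
  rewrite -addn1 natrD.
  case: st => [[i [c [c0 eM]]] | [i [i' [th [ii' eM]]]]].
    rewrite eM phi_scale //; last exact: unitt.
    lra.
  have rb' := rbt t.+1 tm; rewrite eM in rb' *.
  have := phi_rot (th := th) ii' (unitt t tm') (rbt t tm') rb'.
  lra.
have hm := pot m (leqnn m).
rewrite Mm in hm.
have hf := phi_final k e0 e1.
rewrite /log2.
set N : R := (2 ^ k)%:R in hf *.
have N1 : 1 <= N by rewrite /N (ler_nat _ 1) expn_gt0.
have lN : 0 <= ln N by rewrite ln_ge0.
set L := e ^+ 2 * ln N.
have L0 : 0 <= L by rewrite mulr_ge0 // sqr_ge0.
have -> : ln 2 / (32 * (1 + C)) * e ^+ 2 * N * (ln N / ln 2) = (N * L) / (32 * (1 + C)).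
  by rewrite /L; field; apply/andP; split; apply/lt0r_neq0 => //; lra.
have h1 : (N - 1) * L <= 16 * kap * m%:R.
  have -> : (N - 1) * L = (N - 1) * e ^+ 2 * ln N by rewrite /L; ring.
  lra.
have m0 : 0 <= (m%:R : R) by rewrite ler0n.
have h3 : 16 * kap * m%:R <= 16 * (1 + C) * m%:R.
  rewrite ler_wpM2r // ler_wpM2l //; rewrite /kap.
  have : C * e <= C * 1 by rewrite ler_wpM2l ?ltW //; lra.
  lra.
rewrite ler_pdivrMr; last by rewrite mulr_gt0 //; lra.
have [k0|kp] := eqVneq k 0%N.
  have N1' : N = 1 by rewrite /N k0.
  have L00 : L = 0 by rewrite /L N1' ln1 mulr0.
  by rewrite L00 mulr0 mulr_ge0 //; lra.
have N2 : 2 <= N.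
  rewrite /N (ler_nat _ 2).
  have : (2 ^ 1 <= 2 ^ k)%N by rewrite leq_exp2l // lt0n.
  by [].
have h0 : N * L <= 2 * ((N - 1) * L).
  have -> : 2 * ((N - 1) * L) = N * L + (N - 2) * L by ring.
  by rewrite lerDl mulr_ge0 // subr_ge0.
lra.
Qed.
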